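(* Let $\Gamma$ be a group such that the comparison map $H^2_b(\Gamma,\mathbb R)\to H^2(\Gamma,\mathbb R)$ is not injective. Then $\mathrm{def}^{(1)}(\Gamma)\ge\sqrt3$; in particular $\Gamma$ is not Ulam stable.
   Context: For maps $\mu,\nu:\Gamma\to U(n)$: $\|\mu-\nu\|=\sup_\gamma\|\mu(\gamma)-\nu(\gamma)\|$ (operator norm), $D(\mu)=\inf\{\|\mu-\nu\|:\nu\in\mathrm{Hom}(\Gamma,U(n))\}$, $\mathrm{def}(\mu)=\sup_{x,y}\|\mu(xy)-\mu(x)\mu(y)\|$. $F^{(n)}_\Gamma(\delta)=\sup\{D(\mu):\mathrm{def}(\mu)\le\delta,\mu(e)=\mathrm{Id}\}$ over maps $\mu:\Gamma\to U(n)$; $\mathrm{def}^{(n)}(\Gamma)=\lim_{\delta\to0^+}F^{(n)}_\Gamma(\delta)$. $F^{fd}_\Gamma$ and $\mathrm{def}^{fd}(\Gamma)$ are defined the same way with the supremum over all finite dimensions; $\Gamma$ is Ulam stable if $\mathrm{def}^{fd}(\Gamma)=0$. *)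

(* Defs.v *)
From Stdlib Require Import Reals Lra ClassicalEpsilon.
Open Scope R_scope.

Record IsGroup (G : Type) (mul : G -> G -> G) (e : G) (inv : G -> G) : Prop := {
  grp_assoc : forall x y z, mul x (mul y z) = mul (mul x y) z;
  grp_idl : forall x, mul e x = x;
  grp_idr : forall x, mul x e = x;
  grp_invl : forall x, mul (inv x) x = e;
  grp_invr : forall x, mul x (inv x) = e }.

Definition Rsup (E : R -> Prop) : R := epsilon (inhabits 0) (fun l => is_lub E l).
Definition Rinf (E : R -> Prop) : R := - Rsup (fun x => E (- x)).
Definition lim0plus (f : R -> R) : R :=
  epsilon (inhabits 0) (fun L => forall eps, eps > 0 ->
    exists eta, eta > 0 /\ forall d, 0 < d < eta -> Rabs (f d - L) < eps).

Definition C := (R * R)%type.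
Definition C0 : C := (0, 0).
Definition C1 : C := (1, 0).
Definition Cadd (z w : C) : C := (fst z + fst w, snd z + snd w).
Definition Csub (z w : C) : C := (fst z - fst w, snd z - snd w).
Definition Cmul (z w : C) : C :=
  (fst z * fst w - snd z * snd w, fst z * snd w + snd z * fst w).
Definition Cconj (z : C) : C := (fst z, - snd z).
Definition Cnorm2 (z : C) : R := fst z * fst z + snd z * snd z.

Fixpoint Csum (n : nat) (f : nat -> C) : C :=
  match n with O => C0 | S k => Cadd (Csum k f) (f k) end.
Fixpoint Rsum (n : nat) (f : nat -> R) : R :=
  match n with O => 0 | S k => Rsum k f + f k end.

(** * n x n complex matrices (only entries with indices < n are meaningful) *)
Definition Mat := nat -> nat -> C.
Definition Vec := nat -> C.
Definition meq (n : nat) (A B : Mat) : Prop :=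
  forall i j, (i < n)%nat -> (j < n)%nat -> A i j = B i j.
Definition mid : Mat := fun i j => if Nat.eqb i j then C1 else C0.
Definition mmul (n : nat) (A B : Mat) : Mat :=
  fun i j => Csum n (fun k => Cmul (A i k) (B k j)).
Definition madj (A : Mat) : Mat := fun i j => Cconj (A j i).
Definition msub (A B : Mat) : Mat := fun i j => Csub (A i j) (B i j).
Definition unitary (n : nat) (A : Mat) : Prop := meq n (mmul n (madj A) A) mid.
Definition mapply (n : nat) (A : Mat) (v : Vec) : Vec :=
  fun i => Csum n (fun k => Cmul (A i k) (v k)).
Definition vnorm (n : nat) (v : Vec) : R := sqrt (Rsum n (fun i => Cnorm2 (v i))).
Definition opnorm (n : nat) (A : Mat) : R :=
  Rsup (fun r => exists v, vnorm n v = 1 /\ r = vnorm n (mapply n A v)).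

Section Ulam.
Variables (G : Type) (mul : G -> G -> G) (e : G).

Definition Umap (n : nat) (mu : G -> Mat) : Prop := forall g, unitary n (mu g).
Definition IsHom (n : nat) (nu : G -> Mat) : Prop :=
  Umap n nu /\ forall x y, meq n (nu (mul x y)) (mmul n (nu x) (nu y)).
Definition mapdist (n : nat) (mu nu : G -> Mat) : R :=
  Rsup (fun r => exists g, r = opnorm n (msub (mu g) (nu g))).
Definition Dist (n : nat) (mu : G -> Mat) : R :=
  Rinf (fun r => exists nu, IsHom n nu /\ r = mapdist n mu nu).
Definition defect (n : nat) (mu : G -> Mat) : R :=
  Rsup (fun r => exists x y, r = opnorm n (msub (mu (mul x y)) (mmul n (mu x) (mu y)))).
Definition Fn (n : nat) (delta : R) : R :=
  Rsup (fun r => exists mu, Umap n mu /\ defect n mu <= delta /\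
                   meq n (mu e) mid /\ r = Dist n mu).
Definition def_n (n : nat) : R := lim0plus (Fn n).
Definition Ffd (delta : R) : R :=
  Rsup (fun r => exists n mu, (1 <= n)%nat /\ Umap n mu /\ defect n mu <= delta /\
                   meq n (mu e) mid /\ r = Dist n mu).
Definition def_fd : R := lim0plus Ffd.
Definition UlamStable : Prop := def_fd = 0.

(** * Second (bounded) cohomology with trivial real coefficients,
    inhomogeneous (bar) cochains *)
Definition cobound1 (f : G -> R) : G -> G -> R :=
  fun g h => f h - f (mul g h) + f g.
Definition cobound2 (w : G -> G -> R) : G -> G -> G -> R :=
  fun g h k => w h k - w (mul g h) k + w g (mul h k) - w g h.
Definition cocycle2 (w : G -> G -> R) : Prop := forall g h k, cobound2 w g h k = 0.
Definition bounded1 (f : G -> R) : Prop := exists M, forall g, Rabs (f g) <= M.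
Definition bounded2 (w : G -> G -> R) : Prop := exists M, forall g h, Rabs (w g h) <= M.
Definition cohom_eq (w w' : G -> G -> R) : Prop :=
  exists f, forall g h, w g h - w' g h = cobound1 f g h.
Definition bcohom_eq (w w' : G -> G -> R) : Prop :=
  exists f, bounded1 f /\ forall g h, w g h - w' g h = cobound1 f g h.
Definition comparison_injective : Prop :=
  forall w w', cocycle2 w -> bounded2 w -> cocycle2 w' -> bounded2 w' ->
    cohom_eq w w' -> bcohom_eq w w'.
End Ulam.

(* Main.v *)
Require Import Defs.
From Stdlib Require Import Reals Lra Lia ClassicalEpsilon Classical.
Import Defs.
Open Scope R_scope.

Lemma Rsup_spec (E : R -> Prop) :
  (exists x, E x) -> (exists M, forall x, E x -> x <= M) -> is_lub E (Rsup E).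
Proof.
  intros Hne [M HM]. unfold Rsup. apply epsilon_spec.
  destruct (completeness E) as [m Hm]; [exists M; exact HM | exact Hne | ].
  exists m; exact Hm.
Qed.

Lemma Rsup_ge (E : R -> Prop) x M :
  E x -> (forall y, E y -> y <= M) -> x <= Rsup E.
Proof.
  intros Hx HM. destruct (Rsup_spec E) as [H1 _]; eauto.
Qed.

Lemma Rsup_le (E : R -> Prop) M :
  (exists x, E x) -> (forall y, E y -> y <= M) -> Rsup E <= M.
Proof.
  intros Hne HM. destruct (Rsup_spec E) as [_ H2]; eauto.
  
Qed.

Lemma Rsup_eq (E : R -> Prop) a :
  E a -> (forall y, E y -> y = a) -> Rsup E = a.
Proof.
  intros Ha Hall. apply Rle_antisym.
  - apply Rsup_le; eauto. intros y Hy; rewrite (Hall y Hy); lra.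
  - apply (Rsup_ge E a a); auto. intros y Hy; rewrite (Hall y Hy); lra.
Qed.

Lemma Rinf_ge (E : R -> Prop) m :
  (exists x, E x) -> (forall y, E y -> m <= y) -> m <= Rinf E.
Proof.
  intros [x Hx] HM. unfold Rinf.
  assert (Rsup (fun x => E (- x)) <= - m).
  { apply Rsup_le. exists (-x). rewrite Ropp_involutive; auto.
    intros y Hy. specialize (HM _ Hy). lra. }
  lra.
Qed.

Lemma Rinf_le (E : R -> Prop) x m :
  E x -> (forall y, E y -> m <= y) -> Rinf E <= x.
Proof.
  intros Hx HM. unfold Rinf.
  assert (-x <= Rsup (fun x => E (- x))).
  { apply (Rsup_ge _ (-x) (-m)). rewrite Ropp_involutive; auto.
    intros y Hy. specialize (HM _ Hy). lra. }
  lra.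
Qed.

Lemma lim0plus_ge (F : R -> R) a b :
  (forall d, d > 0 -> a <= F d <= b) ->
  (forall d1 d2, 0 < d1 -> d1 <= d2 -> F d1 <= F d2) ->
  lim0plus F >= a.
Proof.
  intros Hb Hm.
  set (E := fun x => exists d, d > 0 /\ x = - F d).
  assert (HL : is_lub E (Rsup E)).
  { apply Rsup_spec. exists (- F 1), 1; split; [lra|auto].
    exists (-a). intros x [d [Hd ->]]. specialize (Hb d Hd). lra. }
  set (L := - Rsup E).
  assert (Hlim : forall eps, eps > 0 ->
    exists eta, eta > 0 /\ forall d, 0 < d < eta -> Rabs (F d - L) < eps).
  { intros eps Heps.
    destruct (classic (exists d, d > 0 /\ F d < L + eps)) as [[d0 [Hd0 Hf]]|Hn].
    - exists d0; split; auto. intros d [Hd Hdd].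
      assert (F d <= F d0) by (apply Hm; lra).
      assert (L <= F d).
      { unfold L. destruct HL as [HL1 _].
        assert (- F d <= Rsup E) by (apply HL1; exists d; split; auto; lra). lra. }
      apply Rabs_def1; lra.
    - exfalso. destruct HL as [_ HL2].
      assert (Rsup E <= - (L + eps)).
      { apply HL2. intros x [d [Hd ->]].
        assert (~ F d < L + eps) by (intro; apply Hn; eauto). lra. }
      unfold L in H. lra. }
  unfold lim0plus.
  set (P := fun L0 => forall eps, eps > 0 ->
    exists eta, eta > 0 /\ forall d, 0 < d < eta -> Rabs (F d - L0) < eps).
  assert (HP : P (epsilon (inhabits 0) P)) by (apply epsilon_spec; exists L; exact Hlim).
  set (L0 := epsilon (inhabits 0) P) in *.
  apply Rnot_lt_ge. intro Hlt.
  destruct (HP (a - L0)) as [eta [Heta Hd]]; [lra|].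
  specialize (Hd (eta/2)). assert (0 < eta/2 < eta) by lra.
  specialize (Hd H). specialize (Hb (eta/2)). assert (eta/2>0) by lra.
  specialize (Hb H0). apply Rabs_def2 in Hd. lra.
Qed.
Ltac Ceq := intros; repeat match goal with z : C |- _ => destruct z end;
  unfold Cmul, Cadd, Csub, Cconj, C0, C1, Cnorm2; simpl; f_equal; ring.

Lemma Csum_ext_lt n f g : (forall k, (k < n)%nat -> f k = g k) -> Csum n f = Csum n g.
Proof. induction n; intros H; simpl; auto. rewrite IHn by (intros; apply H; lia).
  rewrite H by lia; auto. Qed.

Lemma Csum_add n f g : Csum n (fun k => Cadd (f k) (g k)) = Cadd (Csum n f) (Csum n g).
Proof. induction n; simpl. Ceq. rewrite IHn. Ceq. Qed.

Lemma Csum_sub n f g : Csum n (fun k => Csub (f k) (g k)) = Csub (Csum n f) (Csum n g).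
Proof. induction n; simpl. Ceq. rewrite IHn. Ceq. Qed.

Lemma Cmul_Csum_l n c f : Cmul c (Csum n f) = Csum n (fun k => Cmul c (f k)).
Proof. induction n; simpl. Ceq. rewrite <- IHn. Ceq. Qed.

Lemma Cmul_Csum_r n c f : Cmul (Csum n f) c = Csum n (fun k => Cmul (f k) c).
Proof. induction n; simpl. Ceq. rewrite <- IHn. Ceq. Qed.

Lemma Cconj_Csum n f : Cconj (Csum n f) = Csum n (fun k => Cconj (f k)).
Proof. induction n; simpl. Ceq. rewrite <- IHn. Ceq. Qed.

Lemma Csum_zero n f : (forall k, f k = C0) -> Csum n f = C0.
Proof. induction n; simpl; intros H; auto. rewrite IHn, H by auto. Ceq. Qed.

Lemma Csum_swap n m (f : nat -> nat -> C) :
  Csum n (fun i => Csum m (fun j => f i j)) = Csum m (fun j => Csum n (fun i => f i j)).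
Proof.
  induction n; simpl.
  - symmetry; apply Csum_zero; auto.
  - rewrite IHn. rewrite <- Csum_add. auto.
Qed.

Lemma Csum_zero_lt n f : (forall k, (k < n)%nat -> f k = C0) -> Csum n f = C0.
Proof. intros H. rewrite (Csum_ext_lt n f (fun _ => C0)) by auto. apply Csum_zero; auto. Qed.

Lemma Csum_delta n k (f : nat -> C) : (k < n)%nat ->
  Csum n (fun l => Cmul (f l) (mid k l)) = f k.
Proof.
  induction n; intros Hk; [lia|]. simpl.
  destruct (Nat.eq_dec k n) as [->|Hne].
  - rewrite Csum_zero_lt. unfold mid. rewrite Nat.eqb_refl. destruct (f n); Ceq.
    intros l Hl. unfold mid. replace (Nat.eqb n l) with false. Ceq.
    symmetry; apply Nat.eqb_neq; lia.
  - rewrite IHn by lia. unfold mid. replace (Nat.eqb k n) with false. destruct (f k); Ceq.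
    symmetry; apply Nat.eqb_neq; auto.
Qed.

Lemma Rsum_fst n f : Rsum n (fun i => fst (f i)) = fst (Csum n f).
Proof. induction n; simpl; auto. rewrite IHn. auto. Qed.

Lemma Rsum_ext_lt n f g : (forall k, (k < n)%nat -> f k = g k) -> Rsum n f = Rsum n g.
Proof. induction n; intros H; simpl; auto. rewrite IHn by (intros; apply H; lia).
  rewrite H by lia; auto. Qed.

Lemma Cnorm2_fst z : Cnorm2 z = fst (Cmul (Cconj z) z).
Proof. destruct z; unfold Cnorm2, Cmul, Cconj; simpl; ring. Qed.

Lemma unitary_norm n U v : unitary n U ->
  Rsum n (fun i => Cnorm2 (mapply n U v i)) = Rsum n (fun i => Cnorm2 (v i)).
Proof.
  intros HU.
  rewrite (Rsum_ext_lt n _ (fun i => fst (Cmul (Cconj (mapply n U v i)) (mapply n U v i))))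
    by (intros; apply Cnorm2_fst).
  rewrite (Rsum_ext_lt n (fun i => Cnorm2 (v i)) (fun i => fst (Cmul (Cconj (v i)) (v i))))
    by (intros; apply Cnorm2_fst).
  rewrite !Rsum_fst. f_equal.
  transitivity (Csum n (fun i => Csum n (fun k => Csum n (fun l =>
     Cmul (Cmul (Cconj (v k)) (v l)) (Cmul (madj U k i) (U i l)))))).
  { apply Csum_ext_lt. intros i Hi. unfold mapply.
    rewrite Cconj_Csum, Cmul_Csum_r. apply Csum_ext_lt. intros k Hk.
    rewrite Cmul_Csum_l. apply Csum_ext_lt. intros l Hl. unfold madj. Ceq. }
  rewrite Csum_swap.
  transitivity (Csum n (fun k => Csum n (fun l =>
     Cmul (Cmul (Cconj (v k)) (v l)) (mid k l)))).
  { apply Csum_ext_lt. intros k Hk. rewrite Csum_swap. apply Csum_ext_lt. intros l Hl.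
    rewrite <- Cmul_Csum_l. f_equal. apply HU; auto. }
  apply Csum_ext_lt. intros k Hk.
  apply (Csum_delta n k (fun l => Cmul (Cconj (v k)) (v l))); auto.
Qed.

Lemma Rsum_le n f g : (forall k, (k < n)%nat -> f k <= g k) -> Rsum n f <= Rsum n g.
Proof. induction n; intros H; simpl. lra. assert (f n <= g n) by (apply H; lia).
  assert (Rsum n f <= Rsum n g) by (apply IHn; intros; apply H; lia). lra. Qed.

Lemma Rsum_lin n a b f g : Rsum n (fun i => a * f i + b * g i) = a * Rsum n f + b * Rsum n g.
Proof. induction n; simpl. ring. rewrite IHn. ring. Qed.

Lemma Rsum_nonneg n f : (forall k, 0 <= f k) -> 0 <= Rsum n f.
Proof. induction n; intros H; simpl. lra. pose proof (H n). specialize (IHn H). lra. Qed.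

Lemma Cnorm2_nonneg z : 0 <= Cnorm2 z.
Proof. unfold Cnorm2. nra. Qed.

Lemma mapply_msub n A B v i :
  mapply n (msub A B) v i = Csub (mapply n A v i) (mapply n B v i).
Proof. unfold mapply. rewrite <- Csum_sub. apply Csum_ext_lt. intros. unfold msub. Ceq. Qed.

Lemma sqrt_eq1 x : 0 <= x -> sqrt x = 1 -> x = 1.
Proof. intros H H1. rewrite <- (sqrt_sqrt x H), H1. ring. Qed.

Definition e0 : Vec := fun i => if Nat.eqb i 0 then C1 else C0.

Lemma vnorm_e0 n : (1 <= n)%nat -> vnorm n e0 = 1.
Proof.
  intros Hn. unfold vnorm.
  assert (H : forall m, Rsum m (fun i => Cnorm2 (e0 i)) = if Nat.eqb m 0 then 0 else 1).
  { induction m; simpl; auto. rewrite IHm. destruct m; simpl; unfold e0, Cnorm2, C1, C0; simpl; ring. }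
  rewrite H. destruct n; [lia|]. simpl. apply sqrt_1.
Qed.

Lemma opnorm_bound n A B : (1 <= n)%nat -> unitary n A -> unitary n B ->
  0 <= opnorm n (msub A B) <= 2.
Proof.
  intros Hn HA HB. unfold opnorm.
  assert (Hup : forall r, (exists v, vnorm n v = 1 /\ r = vnorm n (mapply n (msub A B) v)) -> r <= 2).
  { intros r [v [Hv ->]]. unfold vnorm in *.
    apply sqrt_eq1 in Hv; [|apply Rsum_nonneg; intros; apply Cnorm2_nonneg].
    replace 2 with (sqrt 4).
    2:{ replace 4 with (2*2) by ring. apply sqrt_square. lra. }
    apply sqrt_le_1_alt.
    apply Rle_trans with (Rsum n (fun i => 2 * Cnorm2 (mapply n A v i) + 2 * Cnorm2 (mapply n B v i))).
    - apply Rsum_le. intros k Hk. rewrite mapply_msub.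
      destruct (mapply n A v k) as [a b], (mapply n B v k) as [c d]. unfold Cnorm2, Csub; simpl. pose proof (Rle_0_sqr (a+c)); pose proof (Rle_0_sqr (b+d)); unfold Rsqr in *; nra.
    - rewrite Rsum_lin, !unitary_norm by auto. lra. }
  split.
  - apply Rle_trans with (vnorm n (mapply n (msub A B) e0)).
    + apply sqrt_pos.
    + apply (Rsup_ge _ _ 2); auto. exists e0; split; auto. apply vnorm_e0; auto.
  - apply Rsup_le; auto. exists (vnorm n (mapply n (msub A B) e0)), e0; split; auto.
    apply vnorm_e0; auto.
Qed.

Lemma mid_sym i j : mid i j = mid j i.
Proof. unfold mid. rewrite Nat.eqb_sym. auto. Qed.

Lemma mid_unitary n : unitary n mid.
Proof.
  intros i j Hi Hj. unfold mmul, madj.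
  rewrite (Csum_ext_lt n _ (fun k => Cmul (Cconj (mid k i)) (mid j k)))
    by (intros; rewrite (mid_sym k j); auto).
  rewrite (Csum_delta n j (fun k => Cconj (mid k i))) by auto.
  rewrite mid_sym. unfold mid. destruct (Nat.eqb i j); Ceq.
Qed.

Section Gen.
Variables (G : Type) (mul : G -> G -> G) (e : G).

Lemma triv_hom n : IsHom G mul n (fun _ => mid).
Proof.
  split. intros g; apply mid_unitary.
  intros x y i j Hi Hj. unfold mmul.
  rewrite (Csum_ext_lt n _ (fun k => Cmul (mid i k) (mid j k)))
    by (intros; rewrite (mid_sym k j); auto).
  rewrite (Csum_delta n j (fun k => mid i k)) by auto. auto.
Qed.

Lemma mapdist_bound n mu nu : (1 <= n)%nat -> Umap G n mu -> Umap G n nu ->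
  0 <= mapdist G n mu nu <= 2.
Proof.
  intros Hn Hmu Hnu. unfold mapdist.
  assert (Hb : forall y, (exists g, y = opnorm n (msub (mu g) (nu g))) -> y <= 2).
  { intros y [g ->]. apply opnorm_bound; auto. }
  split.
  - apply Rle_trans with (opnorm n (msub (mu e) (nu e))).
    + apply opnorm_bound; auto.
    + apply (Rsup_ge _ _ 2); auto. exists e; auto.
  - apply Rsup_le; auto. exists (opnorm n (msub (mu e) (nu e))), e; auto.
Qed.

Lemma Dist_bound n mu : (1 <= n)%nat -> Umap G n mu -> 0 <= Dist G mul n mu <= 2.
Proof.
  intros Hn Hmu. unfold Dist.
  assert (Hlb : forall y, (exists nu, IsHom G mul n nu /\ y = mapdist G n mu nu) -> 0 <= y).
  { intros y [nu [[Hnu _] ->]]. apply mapdist_bound; auto. }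
  split.
  - apply Rinf_ge; auto. exists (mapdist G n mu (fun _ => mid)), (fun _ => mid).
    split; auto. apply triv_hom.
  - apply Rle_trans with (mapdist G n mu (fun _ => mid)).
    + apply (Rinf_le _ _ 0); auto. exists (fun _ => mid); split; auto. apply triv_hom.
    + apply mapdist_bound; auto. intros g; apply mid_unitary.
Qed.

Lemma Rsup_ge_approx (E : R -> Prop) a b :
  (forall s, s < a -> exists x, E x /\ s <= x) -> (forall x, E x -> x <= b) ->
  a <= Rsup E <= b.
Proof.
  intros H Hb.
  assert (Hne : exists x, E x) by (destruct (H (a-1)) as [x [Hx _]]; [lra| eauto]).
  split.
  - apply Rnot_lt_le. intro Hlt.
    destruct (H ((Rsup E + a)/2)) as [x [Hx Hsx]]; [lra|].
    assert (x <= Rsup E) by (apply (Rsup_ge _ _ b); auto). lra.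
  - apply Rsup_le; auto.
Qed.

Lemma Rsup_mono (E1 E2 : R -> Prop) b :
  (forall x, E1 x -> E2 x) -> (exists x, E1 x) -> (forall x, E2 x -> x <= b) ->
  Rsup E1 <= Rsup E2.
Proof.
  intros Hs Hne Hb. apply Rsup_le; auto. intros y Hy. apply (Rsup_ge _ _ b); auto.
Qed.

Lemma final_from_exist :
  (forall d s, d > 0 -> s < sqrt 3 -> exists mu, Umap G 1 mu /\ defect G mul 1 mu <= d /\
      meq 1 (mu e) mid /\ s <= Dist G mul 1 mu) ->
  def_n G mul e 1 >= sqrt 3 /\ ~ UlamStable G mul e.
Proof.
  intros Hex.
  assert (Hs3 : sqrt 3 > 0) by (apply sqrt_lt_R0; lra).
  split.
  - unfold def_n. apply (lim0plus_ge _ _ 2).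
    + intros d Hd. unfold Fn. apply Rsup_ge_approx.
      * intros s Hs. destruct (Hex d s Hd Hs) as [mu [H1 [H2 [H3 H4]]]].
        exists (Dist G mul 1 mu). split; auto. exists mu; auto.
      * intros y [mu [Hmu [_ [_ ->]]]]. apply Dist_bound; auto.
    + intros d1 d2 Hd1 Hd12. unfold Fn. apply (Rsup_mono _ _ 2).
      * intros y [mu [Hmu [H2 [H3 ->]]]]. exists mu. repeat split; auto. lra.
      * destruct (Hex d1 0 Hd1 Hs3) as [mu [H1 [H2 [H3 H4]]]].
        exists (Dist G mul 1 mu). exists mu; auto.
      * intros y [mu [Hmu [_ [_ ->]]]]. apply Dist_bound; auto.
  - unfold UlamStable, def_fd. intro Heq.
    assert (lim0plus (Ffd G mul e) >= sqrt 3); [|lra].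
    apply (lim0plus_ge _ _ 2).
    + intros d Hd. unfold Ffd. apply Rsup_ge_approx.
      * intros s Hs. destruct (Hex d s Hd Hs) as [mu [H1 [H2 [H3 H4]]]].
        exists (Dist G mul 1 mu). split; auto. exists 1%nat, mu; auto.
      * intros y [n [mu [Hn [Hmu [_ [_ ->]]]]]]. apply Dist_bound; auto.
    + intros d1 d2 Hd1 Hd12. unfold Ffd. apply (Rsup_mono _ _ 2).
      * intros y [n [mu [Hn [Hmu [H2 [H3 ->]]]]]]. exists n, mu. repeat split; auto. lra.
      * destruct (Hex d1 0 Hd1 Hs3) as [mu [H1 [H2 [H3 H4]]]].
        exists (Dist G mul 1 mu). exists 1%nat, mu; auto.
      * intros y [n [mu [Hn [Hmu [_ [_ ->]]]]]]. apply Dist_bound; auto.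
Qed.
End Gen.

Lemma sin_sq_le_pos y : 0 < y -> sin y * sin y <= y * y.
Proof.
  intros Hy. pose proof (sin_lt_x y Hy). pose proof (SIN_bound y).
  destruct (Rle_lt_dec 1 y).
  - nra.
  - assert (0 < sin y) by (apply sin_gt_0; pose proof PI2_1; pose proof PI_RGT_0; lra). nra.
Qed.

Lemma sin_sq_le y : sin y * sin y <= y * y.
Proof.
  destruct (Rtotal_order y 0) as [H|[H|H]].
  - pose proof (sin_sq_le_pos (-y)). rewrite sin_neg in H0. nra.
  - subst. rewrite sin_0. lra.
  - apply sin_sq_le_pos; auto.
Qed.

Lemma one_minus_cos x : 2 - 2 * cos x <= x * x.
Proof.
  replace x with (2 * (x/2)) at 1 by field. rewrite cos_2a_sin.
  pose proof (sin_sq_le (x/2)). nra.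
Qed.

Lemma cos_one_zero z : cos z = 1 -> Rabs z < 2 * PI -> z = 0.
Proof.
  intros Hc Hz.
  replace z with (2 * (z/2)) in Hc by field. rewrite cos_2a_sin in Hc.
  assert (Hs : sin (z/2) = 0) by nra.
  apply Rabs_def2 in Hz.
  destruct (Rtotal_order z 0) as [H|[H|H]]; auto.
  - pose proof (sin_gt_0 (-(z/2))). rewrite sin_neg in H0. lra.
  - pose proof (sin_gt_0 (z/2)). lra.
Qed.

Lemma arg_exists z : Cnorm2 z = 1 ->
  exists th, cos th = fst z /\ sin th = snd z /\ -PI <= th <= PI.
Proof.
  destruct z as [x y]. unfold Cnorm2; simpl. intros H.
  assert (Hx : -1 <= x <= 1) by nra.
  pose proof (acos_bound x).
  assert (Hs : sin (acos x) = Rabs y).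
  { rewrite sin_acos by auto. rewrite <- sqrt_Rsqr_abs. f_equal. unfold Rsqr. lra. }
  destruct (Rle_lt_dec 0 y).
  - exists (acos x). rewrite cos_acos by auto. rewrite Hs, Rabs_right by lra. repeat split; lra.
  - exists (- acos x). rewrite cos_neg, sin_neg, cos_acos by auto. rewrite Hs, Rabs_left by lra.
    repeat split; lra.
Qed.

Lemma cos_2PI3 : cos (2 * (PI/3)) = -1/2.
Proof. rewrite cos_2a_cos, cos_PI3. field. Qed.

Lemma angle_bound c th : -1/2 < c <= 1 -> cos th > c -> -PI <= th <= PI ->
  Rabs th < acos c /\ acos c < 2 * (PI/3).
Proof.
  intros Hc Hth Hb. pose proof PI_RGT_0.
  pose proof (acos_bound c). assert (Hca : cos (acos c) = c) by (apply cos_acos; lra).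
  split.
  - apply (cos_decreasing_0 (acos c) (Rabs th)); try lra.
    + apply Rabs_pos.
    + apply Rabs_le; lra.
    + unfold Rabs; destruct (Rcase_abs th); try rewrite cos_neg; lra.
  - apply (cos_decreasing_0 (2*(PI/3)) (acos c)); try lra.
    rewrite cos_2PI3. lra.
Qed.

Lemma opnorm1 A : opnorm 1 A = sqrt (Cnorm2 (A 0%nat 0%nat)).
Proof.
  unfold opnorm. apply Rsup_eq.
  - exists e0. split. apply vnorm_e0; auto. unfold vnorm, mapply, e0; simpl.
    f_equal. destruct (A 0%nat 0%nat); unfold Cnorm2, Cadd, Cmul, C0, C1; simpl; ring.
  - intros y [v [Hv ->]]. unfold vnorm in *. simpl in *.
    apply sqrt_eq1 in Hv; [|pose proof (Cnorm2_nonneg (v 0%nat)); lra].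
    unfold mapply; simpl. f_equal.
    destruct (A 0%nat 0%nat) as [a b], (v 0%nat) as [x y].
    unfold Cnorm2, Cadd, Cmul, C0 in *; simpl in *. nra.
Qed.

Lemma unit1 A : unitary 1 A -> Cnorm2 (A 0%nat 0%nat) = 1.
Proof.
  intros H. specialize (H 0%nat 0%nat ltac:(lia) ltac:(lia)).
  unfold mmul, madj, mid in H; simpl in H. apply (f_equal fst) in H.
  destruct (A 0%nat 0%nat) as [a b]. unfold Cnorm2, Cadd, Cmul, Cconj, C0, C1 in *; simpl in *. lra.
Qed.

Lemma unitary1_of A : Cnorm2 (A 0%nat 0%nat) = 1 -> unitary 1 A.
Proof.
  intros H i j Hi Hj. assert (i = 0%nat) by lia. assert (j = 0%nat) by lia. subst.
  unfold mmul, madj, mid; simpl. destruct (A 0%nat 0%nat) as [a b].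
  unfold Cnorm2, Cadd, Cmul, Cconj, C0, C1 in *; simpl in *. f_equal; lra.
Qed.

Lemma cis_norm a : Cnorm2 (cos a, sin a) = 1.
Proof. unfold Cnorm2; simpl. pose proof (sin2_cos2 a). unfold Rsqr in H. lra. Qed.

Lemma cis_defect a b c :
  Cnorm2 (Csub (cos a, sin a) (Cadd C0 (Cmul (cos b, sin b) (cos c, sin c)))) =
  2 - 2 * cos (a - b - c).
Proof.
  replace (a - b - c) with (a - (b + c)) by ring.
  rewrite cos_minus, cos_plus, sin_plus.
  pose proof (sin2_cos2 a). pose proof (sin2_cos2 b). pose proof (sin2_cos2 c).
  unfold Rsqr in *. unfold Cnorm2, Csub, Cadd, Cmul, C0; simpl.
  set (ca := cos a) in *; set (sa := sin a) in *; set (cb := cos b) in *; set (sb := sin b) in *;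
  set (cc := cos c) in *; set (sc := sin c) in *.
  assert (E : (cb*cc - sb*sc)*(cb*cc - sb*sc) + (cb*sc + sb*cc)*(cb*sc+sb*cc) =
     (sb*sb+cb*cb)*(sc*sc+cc*cc)) by ring.
  rewrite H0, H1 in E. nra.
Qed.

Lemma Rabs_le_b x a : Rabs x <= a -> -a <= x <= a.
Proof. unfold Rabs; destruct (Rcase_abs x); intros; lra. Qed.
Lemma Rabs_lt_b x a : Rabs x < a -> -a < x < a.
Proof. unfold Rabs; destruct (Rcase_abs x); intros; lra. Qed.

Lemma acos_lt23 c : -1/2 < c <= 1 -> acos c < 2 * (PI / 3).
Proof.
  intros Hc. pose proof PI_RGT_0. pose proof (acos_bound c).
  assert (Hca : cos (acos c) = c) by (apply cos_acos; lra).
  apply (cos_decreasing_0 (2*(PI/3)) (acos c)); try lra.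
  rewrite cos_2PI3. lra.
Qed.

Section Main.
Variables (G : Type) (mul : G -> G -> G) (e : G) (inv : G -> G).
Hypothesis HG : IsGroup G mul e inv.
Variables (f : G -> R) (D : R).
Hypothesis HD : forall g h, Rabs (cobound1 G mul f g h) <= D.
Hypothesis Hnb : ~ (exists f', bounded1 G f' /\
   forall g h, cobound1 G mul f g h = cobound1 G mul f' g h).

Definition FF g := f g - f e.
Definition cis (a : R) : Mat := fun _ _ => (cos a, sin a).

Lemma ee : mul e e = e.
Proof. apply (grp_idl _ _ _ _ HG). Qed.

Lemma FF_bound x y : Rabs (FF (mul x y) - FF x - FF y) <= 2 * D.
Proof.
  pose proof (HD x y). pose proof (HD e e). unfold cobound1, FF in *.
  rewrite ee in H0.
  replace (f (mul x y) - f e - (f x - f e) - (f y - f e)) with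
    (- (f y - f (mul x y) + f x) + (f e - f e + f e)) by ring.
  eapply Rle_trans. apply Rabs_triang. rewrite Rabs_Ropp. lra.
Qed.

Lemma D_nonneg : 0 <= D.
Proof. pose proof (HD e e). pose proof (Rabs_pos (cobound1 G mul f e e)). lra. Qed.

Lemma contra_part (t s : R) (nu : G -> Mat) :
  t > 0 -> 0 <= s < sqrt 3 -> t * (2 * D) < 2 * PI - 3 * acos (1 - s * s / 2) ->
  IsHom G mul 1 nu ->
  (forall g, opnorm 1 (msub (cis (t * FF g)) (nu g)) < s) -> False.
Proof.
  intros Ht Hs Htb [Hnu Hmul] Hlt.
  set (c := 1 - s * s / 2).
  assert (Hs3 : s * s < 3).
  { pose proof (sqrt_pos 3). assert (sqrt 3 * sqrt 3 = 3) by (apply sqrt_sqrt; lra). nra. }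
  assert (Hc : -1/2 < c <= 1) by (unfold c; nra).
  set (chi := fun g => nu g 0%nat 0%nat).
  assert (Hchi1 : forall g, Cnorm2 (chi g) = 1) by (intros; apply unit1; auto).
  assert (Hchim : forall x y, chi (mul x y) = Cmul (chi x) (chi y)).
  { intros x y. specialize (Hmul x y 0%nat 0%nat ltac:(lia) ltac:(lia)).
    unfold chi. rewrite Hmul. unfold mmul; simpl.
    destruct (nu x 0%nat 0%nat), (nu y 0%nat 0%nat). Ceq. }
  set (a := fun g => t * FF g).
  set (P := fun g th => cos th = cos (a g) * fst (chi g) + sin (a g) * snd (chi g) /\
                        sin th = sin (a g) * fst (chi g) - cos (a g) * snd (chi g) /\
                        -PI <= th <= PI).
  set (th := fun g => epsilon (inhabits 0) (P g)).
  assert (Hth : forall g, P g (th g)).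
  { intros g. apply epsilon_spec.
    destruct (arg_exists (Cmul (cos (a g), sin (a g)) (Cconj (chi g)))) as [x [H1 [H2 H3]]].
    - pose proof (cis_norm (a g)). pose proof (Hchi1 g).
      destruct (chi g) as [p q]. unfold Cnorm2, Cmul, Cconj in *; simpl in *.
      replace ((cos (a g) * p - sin (a g) * - q) * (cos (a g) * p - sin (a g) * - q) +
          (cos (a g) * - q + sin (a g) * p) * (cos (a g) * - q + sin (a g) * p)) with
          ((cos (a g) * cos (a g) + sin (a g) * sin (a g)) * (p * p + q * q)) by ring.
      rewrite H0, H. ring.
    - exists x. unfold P. destruct (chi g) as [p q]. unfold Cmul, Cconj in *; simpl in *.
      split; [lra|]. split; [lra|auto]. }
  assert (Hthb : forall g, Rabs (th g) < acos c /\ acos c < 2 * (PI / 3)).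
  { intros g. destruct (Hth g) as [H1 [H2 H3]]. apply angle_bound; auto.
    specialize (Hlt g). rewrite opnorm1 in Hlt. unfold msub, cis in Hlt. fold (a g) in Hlt.
    fold (chi g) in Hlt.
    set (X := Cnorm2 (Csub (cos (a g), sin (a g)) (chi g))) in Hlt.
    assert (HX : X < s * s).
    { pose proof (sqrt_pos X). assert (0 <= X) by apply Cnorm2_nonneg.
      assert (sqrt X * sqrt X = X) by (apply sqrt_sqrt; auto). nra. }
    unfold X in HX. pose proof (cis_norm (a g)). pose proof (Hchi1 g).
    destruct (chi g) as [p q]. unfold Cnorm2, Csub in *; simpl in *. unfold c. nra. }
  set (psi := fun g => a g - th g).
  assert (Hpsi : forall g, cos (psi g) = fst (chi g) /\ sin (psi g) = snd (chi g)).
  { intros g. destruct (Hth g) as [H1 [H2 _]]. unfold psi. rewrite cos_minus, sin_minus, H1, H2.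
    pose proof (cis_norm (a g)). unfold Cnorm2 in H; simpl in H.
    destruct (chi g) as [p q]; simpl.
    split.
    - replace (cos (a g) * (cos (a g) * p + sin (a g) * q) + sin (a g) * (sin (a g) * p - cos (a g) * q))
        with (p * (cos (a g) * cos (a g) + sin (a g) * sin (a g))) by ring. rewrite H; ring.
    - replace (sin (a g) * (cos (a g) * p + sin (a g) * q) - cos (a g) * (sin (a g) * p - cos (a g) * q))
        with (q * (cos (a g) * cos (a g) + sin (a g) * sin (a g))) by ring. rewrite H; ring. }
  assert (Hadd : forall x y, psi (mul x y) = psi x + psi y).
  { intros x y.
    assert (Hcos : cos (psi (mul x y) - (psi x + psi y)) = 1).
    { rewrite cos_minus, cos_plus, sin_plus.
      destruct (Hpsi x) as [A1 A2], (Hpsi y) as [B1 B2], (Hpsi (mul x y)) as [C1' C2'].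
      rewrite A1, A2, B1, B2, C1', C2'. rewrite Hchim. pose proof (Hchi1 (mul x y)).
      rewrite Hchim in H. destruct (chi x) as [p q], (chi y) as [p' q'].
      unfold Cnorm2, Cmul in *; simpl in *. lra. }
    apply cos_one_zero in Hcos.
    - lra.
    - unfold psi, a.
      replace (t * FF (mul x y) - th (mul x y) - (t * FF x - th x + (t * FF y - th y))) with
        (t * (FF (mul x y) - FF x - FF y) - th (mul x y) + th x + th y) by ring.
      pose proof (FF_bound x y).
      destruct (Hthb x) as [Bx _], (Hthb y) as [By _], (Hthb (mul x y)) as [Bxy _].
      fold c in Htb.
      assert (HT : Rabs (t * (FF (mul x y) - FF x - FF y)) <= t * (2 * D)).
      { rewrite Rabs_mult, Rabs_right by lra. apply Rmult_le_compat_l; lra. }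
      apply Rabs_le_b in HT. apply Rabs_lt_b in Bx. apply Rabs_lt_b in By. apply Rabs_lt_b in Bxy.
      apply Rabs_def1; lra. }
  apply Hnb. exists (fun g => f g - psi g / t). split.
  - exists (Rabs (f e) + PI / t). intros g.
    replace (f g - psi g / t) with (f e + th g / t).
    2:{ unfold psi, a, FF. field. lra. }
    eapply Rle_trans. apply Rabs_triang.
    apply Rplus_le_compat_l. unfold Rdiv. rewrite Rabs_mult, (Rabs_right (/t)).
    2:{ apply Rle_ge, Rlt_le, Rinv_0_lt_compat; lra. }
    apply Rmult_le_compat_r. apply Rlt_le, Rinv_0_lt_compat; lra.
    destruct (Hth g) as [_ [_ H3]]. apply Rabs_le; lra.
  - intros g h. unfold cobound1. rewrite (Hadd g h). field. lra.
Qed.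
Lemma exist_mu d s : d > 0 -> s < sqrt 3 ->
  exists mu, Umap G 1 mu /\ defect G mul 1 mu <= d /\
      meq 1 (mu e) mid /\ s <= Dist G mul 1 mu.
Proof.
  intros Hd Hs.
  set (s' := Rmax s 0).
  assert (Hs' : 0 <= s' < sqrt 3 /\ s <= s').
  { unfold s'. pose proof (sqrt_lt_R0 3 ltac:(lra)).
    unfold Rmax; destruct (Rle_dec s 0); lra. }
  assert (Hs3 : s' * s' < 3).
  { pose proof (sqrt_pos 3). assert (sqrt 3 * sqrt 3 = 3) by (apply sqrt_sqrt; lra). nra. }
  set (al := acos (1 - s' * s' / 2)).
  assert (Hal : al < 2 * (PI / 3)) by (apply acos_lt23; nra).
  pose proof PI_RGT_0. pose proof D_nonneg.
  set (m := Rmin d (2 * PI - 3 * al)).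
  assert (Hm : 0 < m /\ m <= d /\ m <= 2 * PI - 3 * al).
  { unfold m, Rmin. destruct (Rle_dec d (2 * PI - 3 * al)); lra. }
  set (t := m / (2 * D + 1)).
  assert (Ht : t > 0) by (unfold t; apply Rdiv_lt_0_compat; lra).
  assert (HtD : t * (2 * D) < m).
  { replace m with (t * (2 * D + 1)) by (unfold t; field; lra). nra. }
  exists (fun g => cis (t * FF g)). split; [|split; [|split]].
  - intros g. apply unitary1_of. apply cis_norm.
  - unfold defect. apply Rsup_le.
    + exists (opnorm 1 (msub (cis (t * FF (mul e e))) (mmul 1 (cis (t * FF e)) (cis (t * FF e))))), e, e.
      reflexivity.
    + intros y [x [y' ->]]. rewrite opnorm1. unfold msub, mmul, cis; simpl.
      rewrite cis_defect.
      apply Rle_trans with (Rabs (t * FF (mul x y') - t * FF x - t * FF y')).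
      * rewrite <- sqrt_Rsqr_abs. apply sqrt_le_1_alt. unfold Rsqr. apply one_minus_cos.
      * replace (t * FF (mul x y') - t * FF x - t * FF y') with (t * (FF (mul x y') - FF x - FF y')) by ring.
        rewrite Rabs_mult, (Rabs_right t) by lra. pose proof (FF_bound x y').
        assert (t * Rabs (FF (mul x y') - FF x - FF y') <= t * (2 * D)) by (apply Rmult_le_compat_l; lra).
        lra.
  - intros i j Hi Hj. assert (i = 0%nat) by lia. assert (j = 0%nat) by lia. subst.
    unfold cis, FF. replace (t * (f e - f e)) with 0 by ring. rewrite cos_0, sin_0.
    reflexivity.
  - apply Rinf_ge.
    + exists (mapdist G 1 (fun g => cis (t * FF g)) (fun _ => mid)), (fun _ => mid).
      split; auto. apply triv_hom.
    + intros y [nu [Hnu ->]].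
      destruct (classic (exists g, s' <= opnorm 1 (msub (cis (t * FF g)) (nu g)))) as [[g Hg]|Hn].
      * apply Rle_trans with s'; [lra|]. apply Rle_trans with (opnorm 1 (msub (cis (t * FF g)) (nu g))); auto.
        unfold mapdist. apply (Rsup_ge _ _ 2).
        -- exists g; auto.
        -- intros z [g' ->]. apply opnorm_bound; auto. apply unitary1_of, cis_norm. apply Hnu.
      * exfalso. apply (contra_part t s' nu).
        -- lra.
        -- lra.
        -- fold al. lra.
        -- auto.
        -- intros g. apply Rnot_le_lt. intro. apply Hn. eauto.
Qed.
End Main.

Theorem corollary2p4 (G : Type) (mul : G -> G -> G) (e : G) (inv : G -> G)
  (HG : IsGroup G mul e inv)
  (Hnot : ~ comparison_injective G mul) :
  def_n G mul e 1 >= sqrt 3 /\ ~ UlamStable G mul e.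
Proof.
  destruct (classic (exists w w', bounded2 G w /\ bounded2 G w' /\ cohom_eq G mul w w' /\
                        ~ bcohom_eq G mul w w')) as [[w [w' [[Mw Hw] [[Mw' Hw'] [[f Hf] Hnb]]]]]|Hn].
  - apply final_from_exist. intros d s Hd Hs.
    apply (exist_mu G mul e inv HG f (Mw + Mw')); auto.
    + intros g h. rewrite <- Hf. pose proof (Hw g h). pose proof (Hw' g h).
      apply Rabs_le_b in H. apply Rabs_le_b in H0. apply Rabs_le. lra.
    + intros [f' [Hb Heq]]. apply Hnb. exists f'. split; auto.
      intros g h. rewrite Hf. auto.
  - exfalso. apply Hnot. intros w w' _ Hb _ Hb' Hc. apply NNPP. intro Hnc.
    apply Hn. exists w, w'. auto.
Qed.
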